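(* Let $d\ge2$ and let $g:\mathbb{R}\to\mathbb{R}$ be a locally Lipschitz function. Assume that for every bounded interval $[a,b]$ there is a separately convex function $f_{[a,b]}:\mathbb{R}^d\to\mathbb{R}$ such that $f_{[a,b]}(u,u,\dots,u)=g(u)$ for each $u\in[a,b]$. Then there is a separately convex function $f:\mathbb{R}^d\to\mathbb{R}$ such that $f(u,u,\dots,u)=g(u)$ for each $u\in\mathbb{R}$.
   Context: A function $f:\mathbb{R}^d\to\mathbb{R}$ is called separately convex if it is convex on every line parallel to a coordinate axis. *)

(* Defs.v *)
From Stdlib Require Import Reals.
From mathcomp Require Import ssreflect ssrfun ssrbool eqtype ssrnat fintype.
Open Scope R_scope.

Definition point (d : nat) := 'I_d -> R.

Definition upd {d : nat} (x : point d) (i : 'I_d) (t : R) : point d :=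
  fun j => if j == i then t else x j.

Definition convex_fun (h : R -> R) : Prop :=
  forall s t lam, 0 <= lam <= 1 ->
    h (lam * s + (1 - lam) * t) <= lam * h s + (1 - lam) * h t.

Definition separately_convex {d : nat} (f : point d -> R) : Prop :=
  forall (x : point d) (i : 'I_d), convex_fun (fun t => f (upd x i t)).

Definition diag (d : nat) (u : R) : point d := fun _ => u.

Definition locally_lipschitz (g : R -> R) : Prop :=
  forall a b : R, exists L : R, forall x y : R,
    a <= x <= b -> a <= y <= b -> Rabs (g x - g y) <= L * Rabs (x - y).

(* Main.v *)
Require Import Defs.
From Stdlib Require Import Reals Lra Lia ZArith Psatz.
From Stdlib Require Import ClassicalEpsilon.
From mathcomp Require Import ssreflect ssrfun ssrbool eqtype ssrnat fintype.
From mathcomp Require Import zify.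
Open Scope R_scope.

Lemma cvx_add (h k : R -> R) : convex_fun h -> convex_fun k -> convex_fun (fun t => h t + k t).
Proof. move=> Hh Hk s t l Hl. have := Hh s t l Hl. have := Hk s t l Hl. lra. Qed.

Lemma cvx_scal (c : R) (h : R -> R) : 0 <= c -> convex_fun h -> convex_fun (fun t => c * h t).
Proof. move=> Hc Hh s t l Hl. have := Hh s t l Hl => H.
have := Rmult_le_compat_l c _ _ Hc H. lra. Qed.

Lemma cvx_aff (p q : R) : convex_fun (fun t => p * t + q).
Proof. move=> s t l Hl. lra. Qed.

Lemma cvx_ext (h k : R -> R) : (forall t, h t = k t) -> convex_fun h -> convex_fun k.
Proof. move=> E Hh s t l Hl. rewrite -!E. exact: Hh. Qed.

Lemma cvx_posl (a : R) : convex_fun (fun t => Rmax 0 (a - t)).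
Proof. move=> s t l Hl.
have h1 := Rmax_l 0 (a - s). have h2 := Rmax_r 0 (a - s).
have h3 := Rmax_l 0 (a - t). have h4 := Rmax_r 0 (a - t).
apply: Rmax_lub; nra. Qed.

Lemma cvx_posr (a : R) : convex_fun (fun t => Rmax 0 (t - a)).
Proof. move=> s t l Hl.
have h1 := Rmax_l 0 (s - a). have h2 := Rmax_r 0 (s - a).
have h3 := Rmax_l 0 (t - a). have h4 := Rmax_r 0 (t - a).
apply: Rmax_lub; nra. Qed.

Lemma sc_ext {d} (f g : point d -> R) : (forall x, f x = g x) -> separately_convex f -> separately_convex g.
Proof. move=> E H x i. apply: (cvx_ext _ _ _ (H x i)) => t. by rewrite E. Qed.

Lemma sc_add {d} (f g : point d -> R) : separately_convex f -> separately_convex g -> separately_convex (fun x => f x + g x).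
Proof. move=> Hf Hg x i. exact: cvx_add. Qed.

Lemma sc_scal {d} (c : R) (f : point d -> R) : 0 <= c -> separately_convex f -> separately_convex (fun x => c * f x).
Proof. move=> Hc Hf x i. exact: cvx_scal. Qed.

Lemma upd_same {d} (x : point d) i t : upd x i t i = t.
Proof. by rewrite /upd eqxx. Qed.
Lemma upd_other {d} (x : point d) i j t : j != i -> upd x i t j = x j.
Proof. move=> H. by rewrite /upd (negbTE H). Qed.

Definition pos (r : R) := Rmax 0 r.

Definition qup {d} (i0 i1 : 'I_d) (a : R) (x : point d) :=
  pos (a - x i0) * pos (a - x i1) - (x i0 - a) * (x i1 - a).
Definition qdn {d} (i0 i1 : 'I_d) (b : R) (x : point d) :=
  pos (x i0 - b) * pos (x i1 - b) - (x i0 - b) * (x i1 - b).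

Lemma pos_nonneg r : 0 <= pos r. Proof. exact: Rmax_l. Qed.

Lemma qup_sc {d} (i0 i1 : 'I_d) a : i0 != i1 -> separately_convex (qup i0 i1 a).
Proof.
move=> Hne x i.
case: (eqVneq i i0) => [->|Hi0].
  apply: (cvx_ext (fun t => pos (a - x i1) * Rmax 0 (a - t) + ((- (x i1 - a)) * t + a * (x i1 - a)))).
    move=> t. rewrite /qup upd_same upd_other; last by rewrite eq_sym. rewrite /pos. ring.
  apply: cvx_add; [apply: cvx_scal; [exact: pos_nonneg| exact: cvx_posl]| exact: cvx_aff].
case: (eqVneq i i1) => [->|Hi1].
  apply: (cvx_ext (fun t => pos (a - x i0) * Rmax 0 (a - t) + ((- (x i0 - a)) * t + a * (x i0 - a)))).
    move=> t. rewrite /qup upd_same upd_other //. rewrite /pos. ring.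
  apply: cvx_add; [apply: cvx_scal; [exact: pos_nonneg| exact: cvx_posl]| exact: cvx_aff].
apply: (cvx_ext (fun t => 0 * t + qup i0 i1 a x)).
  move=> t. have h0 : i0 != i by rewrite eq_sym. have h1 : i1 != i by rewrite eq_sym.
  rewrite /qup !upd_other //. ring.
exact: cvx_aff.
Qed.

Lemma qdn_sc {d} (i0 i1 : 'I_d) a : i0 != i1 -> separately_convex (qdn i0 i1 a).
Proof.
move=> Hne x i.
case: (eqVneq i i0) => [->|Hi0].
  apply: (cvx_ext (fun t => pos (x i1 - a) * Rmax 0 (t - a) + ((- (x i1 - a)) * t + a * (x i1 - a)))).
    move=> t. rewrite /qdn upd_same upd_other; last by rewrite eq_sym. rewrite /pos. ring.
  apply: cvx_add; [apply: cvx_scal; [exact: pos_nonneg| exact: cvx_posr]| exact: cvx_aff].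
case: (eqVneq i i1) => [->|Hi1].
  apply: (cvx_ext (fun t => pos (x i0 - a) * Rmax 0 (t - a) + ((- (x i0 - a)) * t + a * (x i0 - a)))).
    move=> t. rewrite /qdn upd_same upd_other //. rewrite /pos. ring.
  apply: cvx_add; [apply: cvx_scal; [exact: pos_nonneg| exact: cvx_posr]| exact: cvx_aff].
apply: (cvx_ext (fun t => 0 * t + qdn i0 i1 a x)).
  move=> t. have h0 : i0 != i by rewrite eq_sym. have h1 : i1 != i by rewrite eq_sym.
  rewrite /qdn !upd_other //. ring.
exact: cvx_aff.
Qed.
Fixpoint fsum (phi : nat -> R) (n : nat) : R :=
  match n with O => 0 | S k => fsum phi k + phi k end.

Lemma fsum_ext phi psi n : (forall j, (j < n)%nat -> phi j = psi j) -> fsum phi n = fsum psi n.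
Proof. elim: n => [|n IH] H //=. rewrite IH; last by move=> j Hj; apply: H; lia.
by rewrite H. Qed.

Lemma fsum_le phi psi n : (forall j, (j < n)%nat -> phi j <= psi j) -> fsum phi n <= fsum psi n.
Proof. elim: n => [|n IH] H /=; first lra.
have := IH (fun j Hj => H j ltac:(lia)). have := H n ltac:(lia). lra. Qed.

Lemma fsum_lin phi psi a b n : fsum (fun j => a * phi j + b * psi j) n = a * fsum phi n + b * fsum psi n.
Proof. elim: n => [|n IH] /=; first ring. rewrite IH. ring. Qed.

Lemma fsum_stab phi n m : (n <= m)%nat -> (forall j, (n <= j)%nat -> phi j = 0) -> fsum phi m = fsum phi n.
Proof. move=> Hnm H. elim: m Hnm => [|m IH] Hnm.
  have E : n = O by lia. by rewrite E.
case: (Nat.eq_dec n (S m)) => [->|Hne] //.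
rewrite /= IH; last lia. rewrite H; [ring|lia]. Qed.

Lemma fsum_stab2 phi n m : (forall j, (n <= j)%nat -> phi j = 0) -> (forall j, (m <= j)%nat -> phi j = 0) -> fsum phi m = fsum phi n.
Proof. move=> Hn Hm. case: (leqP n m) => H.
  exact: fsum_stab. symmetry. apply: fsum_stab => //. exact: ltnW. Qed.

Lemma fsum_nonpos phi n : (forall j, (j < n)%nat -> phi j <= 0) -> fsum phi n <= 0.
Proof. elim: n => [|n IH] H /=; first lra.
have := IH (fun j Hj => H j ltac:(lia)). have := H n ltac:(lia). lra. Qed.

Lemma fsum_nonpos_le phi n k : (forall j, (j < n)%nat -> phi j <= 0) -> (k < n)%nat -> fsum phi n <= phi k.
Proof. elim: n => [|n IH] H Hk /=; first lia.
case: (Nat.eq_dec k n) => [->|Hne].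
  have := fsum_nonpos phi n (fun j Hj => H j ltac:(lia)). lra.
have := IH (fun j Hj => H j ltac:(lia)) ltac:(lia). have := H n ltac:(lia). lra. Qed.

Lemma fsum_nonneg phi n : (forall j, (j < n)%nat -> 0 <= phi j) -> 0 <= fsum phi n.
Proof. elim: n => [|n IH] H /=; first lra.
have := IH (fun j Hj => H j ltac:(lia)). have := H n ltac:(lia). lra. Qed.

Lemma fsum_sc {d} (psi : nat -> point d -> R) (N : point d -> nat) :
  (forall j, separately_convex (psi j)) ->
  (forall x j, (N x <= j)%nat -> psi j x = 0) ->
  separately_convex (fun x => fsum (fun j => psi j x) (N x)).
Proof.
move=> Hc Hv x i s t l Hl /=.
set p1 := upd x i s. set p2 := upd x i t. set pm := upd x i (l * s + (1 - l) * t).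
set n := Nat.max (N p1) (Nat.max (N p2) (N pm)).
rewrite -(fsum_stab (fun j => psi j pm) (N pm) n); [|lia|by move=> j Hj; apply: Hv].
rewrite -(fsum_stab (fun j => psi j p1) (N p1) n); [|lia|by move=> j Hj; apply: Hv].
rewrite -(fsum_stab (fun j => psi j p2) (N p2) n); [|lia|by move=> j Hj; apply: Hv].
rewrite -fsum_lin. apply: fsum_le => j _. exact: (Hc j x i s t l Hl).
Qed.
From Stdlib Require Import FunctionalExtensionality.

Lemma upd_id {d} (x : point d) i : upd x i (x i) = x.
Proof. apply: functional_extensionality => j. rewrite /upd. by case: eqP => [->|]. Qed.

Lemma upd_upd {d} (x : point d) i s t : upd (upd x i s) i t = upd x i t.
Proof. apply: functional_extensionality => j. rewrite /upd. by case: eqP. Qed.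

Lemma corner_bound {d} (R : R) (k : nat) : forall f : point d -> Rdefinitions.R, exists K,
  forall x, (forall i, x i = R \/ x i = - R) -> (forall i : 'I_d, (k <= i)%N -> x i = R) -> f x <= K.
Proof.
elim: k => [|k IH] f.
  exists (f (fun _ => R)) => x _ H.
  have -> : x = (fun _ => R) by apply: functional_extensionality => i; apply: H.
  lra.
case: (ltnP k d) => Hk; last first.
  have [K HK] := IH f. exists K => x H1 H2. apply: HK => // i Hi.
  have := ltn_ord i. lia.
set ik : 'I_d := Ordinal Hk.
have [K1 H1] := IH f. have [K2 H2] := IH (fun x => f (upd x ik (- R))).
exists (Rmax K1 K2) => x Hx Hr.
case: (Hx ik) => Hxk.
  apply: Rle_trans (Rmax_l _ _). apply: H1 => // i Hi.
  case: (eqVneq i ik) => [->//|Hne]. apply: Hr. move: Hne. rewrite /ik.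
  move/eqP => Hne. have : nat_of_ord i <> k by move=> E; apply: Hne; apply: val_inj. lia.
apply: Rle_trans (Rmax_r _ _).
have -> : x = upd (upd x ik R) ik (- R) by rewrite upd_upd -Hxk upd_id.
apply: H2.
  move=> i. rewrite /upd. case: eqP => _; [by left|exact: Hx].
move=> i Hi. rewrite /upd. case: eqP => // Hne. apply: Hr.
have : nat_of_ord i <> k by move=> E; apply: Hne; apply: val_inj. lia.
Qed.

Lemma box_bound_pos {d} (f : point d -> R) (R : R) : separately_convex f -> 0 < R ->
  forall k, exists K, forall x, (forall i, Rabs (x i) <= R) ->
   (forall i : 'I_d, (k <= i)%N -> x i = R \/ x i = - R) -> f x <= K.
Proof.
move=> Hf HR. elim=> [|k IH].
  have [K HK] := corner_bound R d f. exists K => x _ H. apply: HK.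
    move=> i. exact: H.
  move=> i Hi. have := ltn_ord i. lia.
case: (ltnP k d) => Hk; last first.
  have [K HK] := IH. exists K => x H1 H2. apply: HK => // i Hi.
  have := ltn_ord i. lia.
set ik : 'I_d := Ordinal Hk.
have [K HK] := IH. exists K => x Hb Hc.
set t := x ik. set l := (t + R) / (2 * R).
have Ht := Hb ik. rewrite -/t in Ht. have {Ht}Ht : - R <= t <= R by split; have := Rle_abs t; have := Rle_abs (- t); rewrite Rabs_Ropp; lra.
have Hl : 0 <= l <= 1.
  rewrite /l. split.
    apply: Rmult_le_pos; [lra| apply: Rlt_le; apply: Rinv_0_lt_compat; lra].
  apply (Rmult_le_reg_r (2 * R)); first lra.
  rewrite /Rdiv Rmult_assoc Rinv_l; lra.
have Hcv := Hf x ik R (- R) l Hl. simpl in Hcv.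
have Eq : l * R + (1 - l) * - R = t.
  rewrite /l. field. lra.
rewrite Eq /t upd_id in Hcv.
have Hupd : forall s, (s = R \/ s = - R) -> f (upd x ik s) <= K.
  move=> s Hs. apply: HK.
    move=> i. rewrite /upd. case: eqP => _; last exact: Hb.
    case: Hs => ->; rewrite ?Rabs_Ropp Rabs_right; lra.
  move=> i Hi. rewrite /upd. case: eqP => // Hne. apply: Hc.
  have : nat_of_ord i <> k by move=> E; apply: Hne; apply: val_inj. lia.
have := Hupd R (or_introl erefl). have := Hupd (- R) (or_intror erefl).
move=> A B. nra.
Qed.

Lemma box_bound {d} (f : point d -> R) : separately_convex f ->
  forall R, exists K, forall x, (forall i, Rabs (x i) <= R) -> f x <= K.
Proof.
move=> Hf R. have HR : 0 < Rmax R 1 by have := Rmax_r R 1; lra.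
have [K HK] := box_bound_pos f (Rmax R 1) Hf HR d.
exists K => x Hx. apply: HK.
  move=> i. apply: Rle_trans (Rmax_l _ _). exact: Hx.
move=> i Hi. have := ltn_ord i. lia.
Qed.
Lemma to_nat_up r j : (Z.to_nat (up r) <= j)%N -> r < INR j.
Proof.
move=> H. have [A _] := archimed r.
have : IZR (up r) <= INR j.
  case: (Z_lt_le_dec (up r) 0) => Hz.
    have := lt_IZR _ _ (ltac:(apply: IZR_lt; exact: Hz) : IZR (up r) < IZR 0).
    have := pos_INR j. move=> *. have := IZR_lt _ _ Hz. lra.
  rewrite -(Z2Nat.id (up r)) // -INR_IZR_INZ. apply: le_INR. apply/leP. exact: H.
lra.
Qed.

Lemma up_nat r : -1 < r -> INR (Z.to_nat (up r)) = IZR (up r).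
Proof.
move=> H. have [A _] := archimed r.
have Hz : (0 <= up r)%Z. { have : (-1 < up r)%Z by apply: lt_IZR; lra. lia. }
by rewrite INR_IZR_INZ Z2Nat.id.
Qed.

Lemma qup_zero {d} (i0 i1 : 'I_d) a x : x i0 <= a -> x i1 <= a -> qup i0 i1 a x = 0.
Proof. move=> H0 H1. rewrite /qup /pos !Rmax_right; lra || ring. Qed.

Lemma qdn_zero {d} (i0 i1 : 'I_d) a x : a <= x i0 -> a <= x i1 -> qdn i0 i1 a x = 0.
Proof. move=> H0 H1. rewrite /qdn /pos !Rmax_right; lra || ring. Qed.

Lemma pos_cases r : (r <= 0 /\ pos r = 0) \/ (0 <= r /\ pos r = r).
Proof. rewrite /pos. case: (Rle_dec r 0) => H.
  left. split => //. by rewrite Rmax_left.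
  right. split; [lra|]. rewrite Rmax_right; lra. Qed.

Lemma qup_le {d} (i0 i1 : 'I_d) a x : qup i0 i1 a x <= (x i0 - x i1) ^ 2.
Proof. rewrite /qup. move: (x i0) (x i1) => p q.
have S1 := pow2_ge_0 (p + q - 2 * a). have S2 := pow2_ge_0 (p - q).
case: (pos_cases (a - p)) => [[H1 ->]|[H1 ->]];
  case: (pos_cases (a - q)) => [[H2 ->]|[H2 ->]].
- have := Rmult_le_pos (p-a) (q-a) ltac:(lra) ltac:(lra). nra.
- have := Rmult_le_pos (p-a) (a-q) ltac:(lra) ltac:(lra). nra.
- have := Rmult_le_pos (a-p) (q-a) ltac:(lra) ltac:(lra). nra.
- nra.
Qed.

Lemma qdn_le {d} (i0 i1 : 'I_d) a x : qdn i0 i1 a x <= (x i0 - x i1) ^ 2.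
Proof. rewrite /qdn. move: (x i0) (x i1) => p q.
have S1 := pow2_ge_0 (p + q - 2 * a). have S2 := pow2_ge_0 (p - q).
case: (pos_cases (p - a)) => [[H1 ->]|[H1 ->]];
  case: (pos_cases (q - a)) => [[H2 ->]|[H2 ->]].
- have := Rmult_le_pos (a-p) (a-q) ltac:(lra) ltac:(lra). nra.
- have := Rmult_le_pos (a-p) (q-a) ltac:(lra) ltac:(lra). nra.
- have := Rmult_le_pos (p-a) (a-q) ltac:(lra) ltac:(lra). nra.
- nra.
Qed.

Lemma qup_diag {d} (i0 i1 : 'I_d) a u : qup i0 i1 a (diag d u) <= 0 /\ (a + 1 <= u -> qup i0 i1 a (diag d u) <= -1).
Proof. rewrite /qup /diag. case: (pos_cases (a - u)) => [[H1 ->]|[H1 ->]]; split; nra. Qed.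

Lemma qdn_diag {d} (i0 i1 : 'I_d) a u : qdn i0 i1 a (diag d u) <= 0 /\ (u <= a - 1 -> qdn i0 i1 a (diag d u) <= -1).
Proof. rewrite /qdn /diag. case: (pos_cases (u - a)) => [[H1 ->]|[H1 ->]]; split; nra. Qed.

Lemma fsum_zero phi n : (forall j, (j < n)%N -> phi j = 0) -> fsum phi n = 0.
Proof. move=> H. rewrite (fsum_ext phi (fun _ => 0)) //. elim: n {H} => //= n ->. ring. Qed.

Lemma fsum_scal phi c n : fsum (fun j => phi j * c) n = c * fsum phi n.
Proof. elim: n => [|n IH] /=; first ring. rewrite IH. ring. Qed.

Definition Nx {d} (i0 i1 : 'I_d) (m : Z) (x : point d) : nat :=
  Z.to_nat (up (Rabs (x i0) + Rabs (x i1) + Rabs (IZR m))).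
Definition alpha (E : Z -> R -> R) m j := E m (Rabs (IZR m) + INR j + 3).
Definition Upen {d} E (i0 i1 : 'I_d) m x :=
  fsum (fun j => alpha E m j * qup i0 i1 (IZR m + 1 + INR j) x) (Nx i0 i1 m x).
Definition Lpen {d} E (i0 i1 : 'I_d) m x :=
  fsum (fun j => alpha E m j * qdn i0 i1 (IZR m - INR j) x) (Nx i0 i1 m x).
Definition rho (m : Z) := Rabs (IZR m) - 2.
Definition Nr (m : Z) := Z.to_nat (up (Rabs (IZR m) + rho m)).
Definition gam E m := E m (rho m) + 8 * (rho m) ^ 2 * fsum (alpha E m) (Nr m).
Definition hpc {d} (F : Z -> point d -> R) E (i0 i1 : 'I_d) m x :=
  F m x + Upen E i0 i1 m x + Lpen E i0 i1 m x + gam E m * (qdn i0 i1 (IZR m) x + qup i0 i1 (IZR m + 1) x).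

Lemma Upen_vanish {d} (i0 i1 : 'I_d) m x j : (Nx i0 i1 m x <= j)%N -> qup i0 i1 (IZR m + 1 + INR j) x = 0.
Proof. move=> /to_nat_up H. have := Rle_abs (x i0). have := Rle_abs (x i1). have := Rle_abs (IZR m).
have := Rle_abs (- IZR m). rewrite Rabs_Ropp. have := Rabs_pos (x i0). have := Rabs_pos (x i1).
move=> *. apply: qup_zero; lra. Qed.

Lemma Lpen_vanish {d} (i0 i1 : 'I_d) m x j : (Nx i0 i1 m x <= j)%N -> qdn i0 i1 (IZR m - INR j) x = 0.
Proof. move=> /to_nat_up H. have := Rle_abs (- x i0). have := Rle_abs (- x i1). rewrite !Rabs_Ropp. have := Rle_abs (IZR m).
have := Rabs_pos (x i0). have := Rabs_pos (x i1).
move=> *. apply: qdn_zero; lra. Qed.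
Lemma alpha_nonneg (E : Z -> R -> R) m j : (forall m R, 0 <= E m R) -> 0 <= alpha E m j.
Proof. move=> H. exact: H. Qed.

Lemma gam_nonneg (E : Z -> R -> R) m : (forall m R, 0 <= E m R) -> 0 <= gam E m.
Proof. move=> H. rewrite /gam. have := H m (rho m).
have := fsum_nonneg (alpha E m) (Nr m) (fun j _ => H _ _).
have := pow2_ge_0 (rho m). move=> A B C.
have := Rmult_le_pos _ _ (Rmult_le_pos 8 _ ltac:(lra) A) B. lra. Qed.

Lemma hpc_sc {d} (F : Z -> point d -> R) E (i0 i1 : 'I_d) m :
  i0 != i1 -> (forall m R, 0 <= E m R) -> (forall m, separately_convex (F m)) ->
  separately_convex (hpc F E i0 i1 m).
Proof.
move=> Hne HE0 HF. rewrite /hpc.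
apply: sc_add; [apply: sc_add; [apply: sc_add|]|].
- exact: HF.
- apply: (fsum_sc (fun j x => alpha E m j * qup i0 i1 (IZR m + 1 + INR j) x) (Nx i0 i1 m)).
    move=> j. apply: sc_scal; [exact: alpha_nonneg|exact: qup_sc].
  move=> x j Hj. rewrite Upen_vanish //. ring.
- apply: (fsum_sc (fun j x => alpha E m j * qdn i0 i1 (IZR m - INR j) x) (Nx i0 i1 m)).
    move=> j. apply: sc_scal; [exact: alpha_nonneg|exact: qdn_sc].
  move=> x j Hj. rewrite Lpen_vanish //. ring.
- apply: sc_scal; first exact: gam_nonneg.
  apply: sc_add; [exact: qdn_sc|exact: qup_sc].
Qed.

Lemma Upen_diag_le {d} E (i0 i1 : 'I_d) m u : (forall m R, 0 <= E m R) ->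
  Upen E i0 i1 m (diag d u) <= 0.
Proof. move=> HE0. apply: fsum_nonpos => j _.
have [A _] := qup_diag i0 i1 (IZR m + 1 + INR j) u. have := alpha_nonneg E m j HE0. nra. Qed.

Lemma Lpen_diag_le {d} E (i0 i1 : 'I_d) m u : (forall m R, 0 <= E m R) ->
  Lpen E i0 i1 m (diag d u) <= 0.
Proof. move=> HE0. apply: fsum_nonpos => j _.
have [A _] := qdn_diag i0 i1 (IZR m - INR j) u. have := alpha_nonneg E m j HE0. nra. Qed.

Lemma hpc_diag_le {d} (F : Z -> point d -> R) E (i0 i1 : 'I_d) (g : R -> R) m u :
  (forall m R, 0 <= E m R) ->
  (forall m R u, Rabs u <= R -> F m (diag d u) - g u <= E m R) ->
  (forall m u, IZR m - 1 <= u <= IZR m + 2 -> F m (diag d u) = g u) ->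
  hpc F E i0 i1 m (diag d u) <= g u.
Proof.
move=> HE0 HE2 HFd. rewrite /hpc.
have HU := Upen_diag_le E i0 i1 m u HE0. have HL := Lpen_diag_le E i0 i1 m u HE0.
have Hb : gam E m * (qdn i0 i1 (IZR m) (diag d u) + qup i0 i1 (IZR m + 1) (diag d u)) <= 0.
  have [A _] := qdn_diag i0 i1 (IZR m) u. have [B _] := qup_diag i0 i1 (IZR m + 1) u.
  have := gam_nonneg E m HE0. nra.
case: (Rle_dec (IZR m - 1) u) => H1; case: (Rle_dec u (IZR m + 2)) => H2.
- rewrite HFd; [lra|lra].
-
  have Hr : -1 < u - IZR m - 3 by lra.
  set j0 := Z.to_nat (up (u - IZR m - 3)).
  have [A1 A2] := archimed (u - IZR m - 3).
  have HJ : INR j0 = IZR (up (u - IZR m - 3)) by exact: up_nat.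
  have Hq : qup i0 i1 (IZR m + 1 + INR j0) (diag d u) <= -1.
    apply: (proj2 (qup_diag _ _ _ _)). lra.
  have Hab : Rabs u <= Rabs (IZR m) + INR j0 + 3.
    have := Rle_abs (IZR m). have := Rle_abs (- IZR m). rewrite Rabs_Ropp. move=> ? ?.
    case: (Rle_dec 0 u) => Hu. rewrite Rabs_right; lra. rewrite Rabs_left; lra.
  have Hal := HE2 m _ u Hab. rewrite -/(alpha E m j0) in Hal.
  have HU2 : Upen E i0 i1 m (diag d u) <= alpha E m j0 * qup i0 i1 (IZR m + 1 + INR j0) (diag d u).
    rewrite /Upen -(fsum_stab _ (Nx i0 i1 m (diag d u)) (Nat.max (Nx i0 i1 m (diag d u)) j0.+1)).
    + apply: (fsum_nonpos_le (fun j => alpha E m j * qup i0 i1 (IZR m + 1 + INR j) (diag d u))).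
        move=> j _. have [A _] := qup_diag i0 i1 (IZR m + 1 + INR j) u. have := alpha_nonneg E m j HE0. nra.
      lia.
    + lia.
    + move=> j Hj. rewrite Upen_vanish //. ring.
  have := alpha_nonneg E m j0 HE0. move=> Ha. nra.
-
  have Hr : -1 < IZR m - u - 2 by lra.
  set j0 := Z.to_nat (up (IZR m - u - 2)).
  have [A1 A2] := archimed (IZR m - u - 2).
  have HJ : INR j0 = IZR (up (IZR m - u - 2)) by exact: up_nat.
  have Hq : qdn i0 i1 (IZR m - INR j0) (diag d u) <= -1.
    apply: (proj2 (qdn_diag _ _ _ _)). lra.
  have Hab : Rabs u <= Rabs (IZR m) + INR j0 + 3.
    have := Rle_abs (IZR m). have := Rle_abs (- IZR m). rewrite Rabs_Ropp. move=> ? ?.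
    case: (Rle_dec 0 u) => Hu. rewrite Rabs_right; lra. rewrite Rabs_left; lra.
  have Hal := HE2 m _ u Hab. rewrite -/(alpha E m j0) in Hal.
  have HL2 : Lpen E i0 i1 m (diag d u) <= alpha E m j0 * qdn i0 i1 (IZR m - INR j0) (diag d u).
    rewrite /Lpen -(fsum_stab _ (Nx i0 i1 m (diag d u)) (Nat.max (Nx i0 i1 m (diag d u)) j0.+1)).
    + apply: (fsum_nonpos_le (fun j => alpha E m j * qdn i0 i1 (IZR m - INR j) (diag d u))).
        move=> j _. have [A _] := qdn_diag i0 i1 (IZR m - INR j) u. have := alpha_nonneg E m j HE0. nra.
      lia.
    + lia.
    + move=> j Hj. rewrite Lpen_vanish //. ring.
  have := alpha_nonneg E m j0 HE0. move=> Ha. nra.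
- lra.
Qed.
Lemma hpc_diag_eq {d} (F : Z -> point d -> R) E (i0 i1 : 'I_d) (g : R -> R) m u :
  (forall m u, IZR m - 1 <= u <= IZR m + 2 -> F m (diag d u) = g u) ->
  IZR m <= u <= IZR m + 1 -> hpc F E i0 i1 m (diag d u) = g u.
Proof.
move=> HFd Hu. rewrite /hpc HFd; last lra.
rewrite /Upen /Lpen !fsum_zero.
- rewrite qdn_zero; [|rewrite /diag; lra|rewrite /diag; lra].
  rewrite qup_zero; [ring|rewrite /diag; lra|rewrite /diag; lra].
- move=> j _. have Hj := pos_INR j. rewrite qdn_zero; [ring|rewrite /diag; lra|rewrite /diag; lra].
- move=> j _. have Hj := pos_INR j. rewrite qup_zero; [ring|rewrite /diag; lra|rewrite /diag; lra].
Qed.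

Lemma barrier_le {d} (i0 i1 : 'I_d) m x : 2 <= Rabs (IZR m) ->
  (forall i, Rabs (x i) <= rho m) -> qdn i0 i1 (IZR m) x + qup i0 i1 (IZR m + 1) x <= -1.
Proof.
rewrite /rho => Hm Hx. have A0 := Hx i0. have A1 := Hx i1.
have B0 := Rle_abs (x i0). have B1 := Rle_abs (x i1).
have C0 := Rle_abs (- x i0). have C1 := Rle_abs (- x i1). rewrite !Rabs_Ropp in C0 C1.
case: (Rle_dec 0 (IZR m)) => Hs.
  rewrite Rabs_right in Hm A0 A1; try lra.
  rewrite qup_zero; try lra. rewrite /qdn /pos !Rmax_left; try lra.
  have := Rmult_le_pos (IZR m - x i0 - 1) (IZR m - x i1 - 1) ltac:(lra) ltac:(lra). nra.
rewrite Rabs_left in Hm A0 A1; try lra.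
rewrite qdn_zero; try lra. rewrite /qup /pos !Rmax_left; try lra.
have := Rmult_le_pos (x i0 - IZR m - 2) (x i1 - IZR m - 2) ltac:(lra) ltac:(lra). nra.
Qed.

Lemma hpc_far {d} (F : Z -> point d -> R) E (i0 i1 : 'I_d) m x :
  (forall m R, 0 <= E m R) ->
  (forall m R x, (forall i, Rabs (x i) <= R) -> F m x <= E m R) ->
  2 <= Rabs (IZR m) -> (forall i, Rabs (x i) <= rho m) -> hpc F E i0 i1 m x <= 0.
Proof.
move=> HE0 HE1 Hm Hx. rewrite /hpc.
have HF := HE1 m (rho m) x Hx.
have Hb := barrier_le i0 i1 m x Hm Hx.
have Hg := gam_nonneg E m HE0.
have A0 := Hx i0. have A1 := Hx i1.
have B0 := Rle_abs (x i0). have B1 := Rle_abs (x i1).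
have C0 := Rle_abs (- x i0). have C1 := Rle_abs (- x i1). rewrite !Rabs_Ropp in C0 C1.
have Hm1 := Rle_abs (IZR m). have Hm2 := Rle_abs (- IZR m). rewrite Rabs_Ropp in Hm2.
have Hsq : (x i0 - x i1) ^ 2 <= 4 * rho m ^ 2.
  have := Rmult_le_pos (2 * rho m - (x i0 - x i1)) (2 * rho m + (x i0 - x i1)) ltac:(lra) ltac:(lra). nra.
have Hvan : forall j, (Nr m <= j)%N -> IZR m + 1 + INR j > rho m /\ IZR m - INR j < - rho m.
  move=> j /to_nat_up H. split; lra.
have HU : Upen E i0 i1 m x <= 4 * rho m ^ 2 * fsum (alpha E m) (Nr m).
  rewrite /Upen (fsum_stab2 _ (Nr m) (Nx i0 i1 m x)).
  - rewrite -fsum_scal. apply: fsum_le => j _. have := qup_le i0 i1 (IZR m + 1 + INR j) x.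
    have := alpha_nonneg E m j HE0. nra.
  - move=> j Hj. have [V _] := Hvan j Hj. rewrite qup_zero; [ring|lra|lra].
  - move=> j Hj. rewrite Upen_vanish //. ring.
have HL : Lpen E i0 i1 m x <= 4 * rho m ^ 2 * fsum (alpha E m) (Nr m).
  rewrite /Lpen (fsum_stab2 _ (Nr m) (Nx i0 i1 m x)).
  - rewrite -fsum_scal. apply: fsum_le => j _. have := qdn_le i0 i1 (IZR m - INR j) x.
    have := alpha_nonneg E m j HE0. nra.
  - move=> j Hj. have [_ V] := Hvan j Hj. rewrite qdn_zero; [ring|lra|lra].
  - move=> j Hj. rewrite Lpen_vanish //. ring.
have : gam E m * (qdn i0 i1 (IZR m) x + qup i0 i1 (IZR m + 1) x) <= - gam E m by nra.
rewrite /gam. lra.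
Qed.

Lemma finite_pts_bound (h : Z -> R) (n : nat) : exists B, forall m : Z, (Z.abs m <= Z.of_nat n)%Z -> h m <= B.
Proof.
elim: n => [|n [B HB]].
  exists (h 0%Z) => m Hm. have -> : m = 0%Z by lia. lra.
exists (Rmax B (Rmax (h (Z.of_nat n.+1)) (h (- Z.of_nat n.+1)%Z))) => m Hm.
case: (Z_le_dec (Z.abs m) (Z.of_nat n)) => H.
  apply: Rle_trans (Rmax_l _ _). exact: HB.
apply: Rle_trans (Rmax_r _ _).
case: (Z_le_dec 0 m) => H2.
  have -> : m = Z.of_nat n.+1 by lia. exact: Rmax_l.
have -> : m = (- Z.of_nat n.+1)%Z by lia. exact: Rmax_r.
Qed.

Lemma coord_bound {d} (x : point d) : exists R, 0 <= R /\ forall i, Rabs (x i) <= R.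
Proof.
have : forall k, exists R, 0 <= R /\ forall i : 'I_d, (i < k)%N -> Rabs (x i) <= R.
  elim=> [|k [R [HR H]]].
    exists 0. split; [lra|] => i Hi. lia.
  case: (ltnP k d) => Hk.
    exists (Rmax R (Rabs (x (Ordinal Hk)))). split.
      apply: Rle_trans (Rmax_l _ _). done.
    move=> i Hi. case: (ltnP i k) => Hik.
      apply: Rle_trans (Rmax_l _ _). exact: H.
    have -> : i = Ordinal Hk by apply: val_inj => /=; lia. exact: Rmax_r.
  exists R. split => // i Hi. apply: H. have := ltn_ord i. lia.
move=> /(_ d) [R [HR H]]. exists R. split => // i. apply: H. exact: ltn_ord.
Qed.

Lemma hpc_bound {d} (F : Z -> point d -> R) E (i0 i1 : 'I_d) x :
  (forall m R, 0 <= E m R) ->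
  (forall m R x, (forall i, Rabs (x i) <= R) -> F m x <= E m R) ->
  exists B, forall m, hpc F E i0 i1 m x <= B.
Proof.
move=> HE0 HE1.
have [R [HR Hx]] := coord_bound x.
set n := Z.to_nat (up (R + 2)).
have [B HB] := finite_pts_bound (fun m => hpc F E i0 i1 m x) n.
exists (Rmax 0 B) => m.
case: (Z_le_dec (Z.abs m) (Z.of_nat n)) => H.
  apply: Rle_trans (Rmax_r _ _). exact: HB.
apply: Rle_trans (Rmax_l _ _).
have Hn : R + 2 < INR n.+1 by apply: to_nat_up; rewrite /n; lia.
have Ha : INR n.+1 <= Rabs (IZR m).
  rewrite -abs_IZR INR_IZR_INZ. apply: IZR_le. lia.
apply: hpc_far => //; first lra.
move=> i. rewrite /rho. have := Hx i. lra.
Qed.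
Theorem proposition2p2 (d : nat) (g : R -> R) :
  (2 <= d)%N ->
  locally_lipschitz g ->
  (forall a b : R, a <= b -> exists f : point d -> R,
      separately_convex f /\ forall u, a <= u <= b -> f (diag d u) = g u) ->
  exists f : point d -> R,
    separately_convex f /\ forall u : R, f (diag d u) = g u.
Proof.
move=> Hd Hlip H.
have H0 : (0 < d)%N by lia. have H1 : (1 < d)%N by lia.
set i0 : 'I_d := Ordinal H0. set i1 : 'I_d := Ordinal H1.
have Hne : i0 != i1 by apply/eqP => E; have := congr1 val E.
have Hm : forall m : Z, exists f : point d -> R, separately_convex f /\
    forall u, IZR m - 1 <= u <= IZR m + 2 -> f (diag d u) = g u.
  move=> m. apply: H. lra.
pose F := fun m => proj1_sig (constructive_indefinite_description _ (Hm m)).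
have HFall : forall m, separately_convex (F m) /\
    forall u, IZR m - 1 <= u <= IZR m + 2 -> F m (diag d u) = g u :=
  fun m => proj2_sig (constructive_indefinite_description _ (Hm m)).
have HF : forall m, separately_convex (F m) := fun m => proj1 (HFall m).
have HFd : forall m u, IZR m - 1 <= u <= IZR m + 2 -> F m (diag d u) = g u := fun m => proj2 (HFall m).
have HEx : forall m R, exists e, 0 <= e /\ (forall x, (forall i, Rabs (x i) <= R) -> F m x <= e) /\
    (forall u, Rabs u <= R -> F m (diag d u) - g u <= e).
  move=> m R. have [K HK] := box_bound (F m) (HF m) R.
  have [L HL] := Hlip (- Rabs R) (Rabs R).
  exists (Rmax 0 (Rmax K (K - g 0 + Rabs L * Rabs R))). split; first exact: Rmax_l.
  split.
    move=> x Hx. apply: Rle_trans (Rmax_r _ _). apply: Rle_trans (Rmax_l _ _). exact: HK.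
  move=> u Hu. apply: Rle_trans (Rmax_r _ _). apply: Rle_trans (Rmax_r _ _).
  have HKu : F m (diag d u) <= K by apply: HK => i; rewrite /diag.
  have Hr1 := Rle_abs R. have Hr2 := Rle_abs (- R). rewrite Rabs_Ropp in Hr2.
  have Hu1 := Rle_abs u. have Hu2 := Rle_abs (- u). rewrite Rabs_Ropp in Hu2.
  have Hr0 := Rabs_pos R.
  have := HL u 0 ltac:(split; lra) ltac:(split; lra). rewrite Rminus_0_r => Hg.
  have Hg2 := Rle_abs (- (g u - g 0)). rewrite Rabs_Ropp in Hg2.
  have HLa : L * Rabs u <= Rabs L * Rabs R.
    have := Rle_abs L. have := Rabs_pos u. have := Rabs_pos L. nra.
  lra.
pose E := fun m R => proj1_sig (constructive_indefinite_description _ (HEx m R)).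
have HEall : forall m R, 0 <= E m R /\ (forall x, (forall i, Rabs (x i) <= R) -> F m x <= E m R) /\
    (forall u, Rabs u <= R -> F m (diag d u) - g u <= E m R) :=
  fun m R => proj2_sig (constructive_indefinite_description _ (HEx m R)).
have HE0 : forall m R, 0 <= E m R := fun m R => proj1 (HEall m R).
have HE1 : forall m R x, (forall i, Rabs (x i) <= R) -> F m x <= E m R := fun m R => proj1 (proj2 (HEall m R)).
have HE2 : forall m R u, Rabs u <= R -> F m (diag d u) - g u <= E m R := fun m R => proj2 (proj2 (HEall m R)).
pose h := hpc F E i0 i1.
have Hbd : forall x, bound (fun r => exists m, r = h m x).
  move=> x. have [B HB] := hpc_bound F E i0 i1 x HE0 HE1. exists B => r [m ->]. exact: HB.
pose f := fun x => proj1_sig (completeness _ (Hbd x) (ex_intro _ (h 0%Z x) (ex_intro _ 0%Z erefl))).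
have Hf : forall x, is_lub (fun r => exists m, r = h m x) (f x) :=
  fun x => proj2_sig (completeness _ (Hbd x) (ex_intro _ (h 0%Z x) (ex_intro _ 0%Z erefl))).
exists f. split.
  move=> x i s t l Hl /=.
  have [_ Hleast] := Hf (upd x i (l * s + (1 - l) * t)).
  apply: Hleast => r [m ->].
  have Hc := hpc_sc F E i0 i1 m Hne HE0 HF x i s t l Hl. simpl in Hc.
  have [Hs _] := Hf (upd x i s). have [Ht _] := Hf (upd x i t).
  have A := Hs _ (ex_intro _ m erefl). have B := Ht _ (ex_intro _ m erefl).
  have A' := Rmult_le_compat_l l _ _ (proj1 Hl) A.
  have B' := Rmult_le_compat_l (1 - l) _ _ ltac:(lra) B.
  rewrite /h in A' B' *. lra.
move=> u. have [Hu Hleast] := Hf (diag d u).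
apply: Rle_antisym.
  apply: Hleast => r [m ->]. exact: hpc_diag_le.
have [A1 A2] := archimed u.
have Hm1 : IZR (up u - 1) <= u <= IZR (up u - 1) + 1 by rewrite minus_IZR; lra.
rewrite -(hpc_diag_eq F E i0 i1 g (up u - 1) u HFd Hm1).
exact: Hu _ (ex_intro _ _ erefl).
Qed.
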